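(* Fix reals $0<\varepsilon<1$ and $c\ge 12/\varepsilon$, and let $S$ be a set produced by the construction described in the context (with any choices allowed there). Then for all integers $m<n$ with $n$ sufficiently large and $Q_m$ defined, the number of collinear triples consisting of two points of $S\cap Q_m$ and one lattice point of $Q_n$ is at most $$\frac{8\cdot2^{m+n}}{c^{3}n^{2+2\varepsilon}m^{1+\varepsilon}}\cdot n.$$
   Context: Construction. Fix $0<\varepsilon<1$ and $c\ge 12/\varepsilon$. For each sufficiently large integer $n$ (say $n\ge n_0$), let $s_n=\left\lfloor\frac{2^n}{cn^{1+\varepsilon}}\right\rfloor$, $Y_n=\left\lfloor\frac{2^n}{n^{\varepsilon}}\right\rfloor$, and let $Q_n=[2^n,2^n+s_n]\times[Y_n-s_n,Y_n]$ be the axis-parallel square with side $s_n$ and top left corner $(2^n,Y_n)$. Let $p_n$ be the largest prime smaller than $s_n$. For integers $a,b$, let $\mathcal{P}_n(a,b)=\{(2^n+x,\;Y_n-y): x,y\in\{0,\dots,p_n-1\},\ y\equiv (x-a)^2+b \pmod{p_n}\}$, a translated copy of the modular parabola $y=(x-a)^2+b \bmod p_n$ in $Q_n$. The set $S\subseteq\mathbb{Z}^2$ is built iteratively for $n=n_0,n_0+1,\dots$: given the already selected points $S_{<n}=S\cap\bigcup_{m<n}Q_m$, choose parameters $(a_n,b_n)\in\{0,\dots,p_n-1\}^2$ minimizing the number of collinear triples formed by points of $\mathcal{P}_n(a_n,b_n)\cup S_{<n}$ that contain points of both $\mathcal{P}_n(a_n,b_n)$ and $S_{<n}$; delete from $\mathcal{P}_n=\mathcal{P}_n(a_n,b_n)$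 one point of each such triple, and add the remaining points of $\mathcal{P}_n$ to $S$. Thus $S\cap Q_n\subseteq\mathcal{P}_n$. *)

(* Defs.v *)
From Stdlib Require Import Reals ZArith List Znumtheory.

Set Implicit Arguments.

Definition pt := (Z * Z)%type.

(* floor of a real number: Int_part r = up r - 1 = floor r *)
Definition s_ (eps c : R) (n : nat) : Z :=
  Int_part (2 ^ n / (c * Rpower (INR n) (1 + eps)))%R.
Definition Y_ (eps : R) (n : nat) : Z :=
  Int_part (2 ^ n / Rpower (INR n) eps)%R.

Definition inQ (eps c : R) (n : nat) (z : pt) : Prop :=
  let X := (2 ^ Z.of_nat n)%Z in
  (X <= fst z <= X + s_ eps c n)%Z /\
  (Y_ eps n - s_ eps c n <= snd z <= Y_ eps n)%Z.

Definition largest_prime_below (p s : Z) : Prop :=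
  prime p /\ (p < s)%Z /\ forall q, prime q -> (q < s)%Z -> (q <= p)%Z.

Definition inP (eps c : R) (n : nat) (p a b : Z) (z : pt) : Prop :=
  exists x : Z, (0 <= x < p)%Z /\
    z = ((2 ^ Z.of_nat n + x)%Z,
         (Y_ eps n - (((x - a) ^ 2 + b) mod p))%Z).

Definition collinear (u v w : pt) : Prop :=
  ((fst v - fst u) * (snd w - snd u) - (snd v - snd u) * (fst w - fst u) = 0)%Z.

(* strict lexicographic order on Z^2, used to represent an unordered set of
   distinct points canonically as an increasing tuple *)
Definition ltlex (u v : pt) : Prop :=
  (fst u < fst v)%Z \/ (fst u = fst v /\ (snd u < snd v)%Z).

Definition card_is (T : Type) (A : T -> Prop) (k : nat) : Prop :=
  exists l : list T, NoDup l /\ (forall x, In x l <-> A x) /\ length l = k.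

Definition S_lt (eps c : R) (n0 : nat) (S : pt -> Prop) (n : nat) (z : pt) : Prop :=
  S z /\ exists m, (n0 <= m)%nat /\ (m < n)%nat /\ inQ eps c m z.

Definition mixed_triple (eps c : R) (n0 : nat) (S : pt -> Prop) (n : nat)
    (p a b : Z) (t : pt * pt * pt) : Prop :=
  match t with
  | (u, v, w) =>
      let P := inP eps c n p a b in
      let L := S_lt eps c n0 S n in
      ltlex u v /\ ltlex v w /\ collinear u v w /\
      (P u \/ L u) /\ (P v \/ L v) /\ (P w \/ L w) /\
      (P u \/ P v \/ P w) /\ (L u \/ L v \/ L w)
  end.

Definition in_triple (z : pt) (t : pt * pt * pt) : Prop :=
  match t with (u, v, w) => z = u \/ z = v \/ z = w end.

(* S is a set produced by the construction started at n0 (with any allowed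
   choices of minimizing parameters and of deleted points) *)
Definition construction (eps c : R) (n0 : nat) (S : pt -> Prop) : Prop :=
  (forall z, S z -> exists n, (n0 <= n)%nat /\ inQ eps c n z) /\
  forall n : nat, (n0 <= n)%nat ->
    exists p a b : Z,
      largest_prime_below p (s_ eps c n) /\
      (0 <= a < p)%Z /\ (0 <= b < p)%Z /\
      (exists k, card_is (mixed_triple eps c n0 S n p a b) k /\
         forall a' b' k', (0 <= a' < p)%Z -> (0 <= b' < p)%Z ->
           card_is (mixed_triple eps c n0 S n p a' b') k' -> (k <= k')%nat) /\
      exists f : pt * pt * pt -> pt,
        (forall t, mixed_triple eps c n0 S n p a b t ->
            in_triple (f t) t /\ inP eps c n p a b (f t)) /\
        (forall z, inQ eps c n z ->
            (S z <-> (inP eps c n p a b z /\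
                      ~ exists t, mixed_triple eps c n0 S n p a b t /\ f t = z))).

(* collinear triples made of two (distinct) points of S ∩ Q_m and one lattice
   point of Q_n; the pair is represented with u < v lexicographically *)
Definition pair_triple (eps c : R) (S : pt -> Prop) (m n : nat)
    (t : pt * pt * pt) : Prop :=
  match t with
  | (u, v, w) =>
      ltlex u v /\ S u /\ inQ eps c m u /\ S v /\ inQ eps c m v /\
      inQ eps c n w /\ collinear u v w
  end.

(* Main.v *)
Require Import Defs.
From Stdlib Require Import Reals ZArith List Znumtheory Lia Lra Psatz ClassicalEpsilon.
Open Scope Z_scope.

Lemma card_exists (T : Type) (dec : forall x y : T, {x = y} + {x <> y})
  (A : T -> Prop) (l : list T) :
  (forall x, A x -> In x l) -> exists k, card_is A k.
Proof.
  intros H.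
  set (f := fun x => if excluded_middle_informative (A x) then true else false).
  exists (length (nodup dec (filter f l))).
  exists (nodup dec (filter f l)). split; [apply NoDup_nodup|]. split; [|reflexivity].
  intros x. rewrite nodup_In, filter_In. unfold f.
  destruct (excluded_middle_informative (A x)); split; intuition; discriminate.
Qed.

Lemma card_inj (T U : Type) (A : T -> Prop) (k : nat) (f : T -> U) (l2 : list U) :
  card_is A k -> (forall x, A x -> In (f x) l2) ->
  (forall x y, A x -> A y -> f x = f y -> x = y) -> (k <= length l2)%nat.
Proof.
  intros [l [Hnd [Hin Hlen]]] Hf Hinj. subst k.
  rewrite <- (length_map f l). apply NoDup_incl_length.
  - apply NoDup_map_NoDup_ForallPairs; auto.
    intros x y Hx Hy. apply Hinj; apply Hin; auto.
  - intros y Hy. apply in_map_iff in Hy. destruct Hy as [x [<- Hx]]. apply Hf, Hin, Hx.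
Qed.

Definition Zrange (lo hi : Z) : list Z :=
  map (fun i => lo + Z.of_nat i) (seq 0 (Z.to_nat (hi - lo + 1))).

Lemma In_Zrange lo hi x : lo <= x <= hi -> In x (Zrange lo hi).
Proof.
  intros H. unfold Zrange. apply in_map_iff. exists (Z.to_nat (x - lo)).
  split. rewrite Z2Nat.id; lia. apply in_seq. lia.
Qed.

Lemma In_Zrange_inv lo hi x : In x (Zrange lo hi) -> lo <= x <= hi.
Proof.
  unfold Zrange. intros H. apply in_map_iff in H. destruct H as [i [<- Hi]].
  apply in_seq in Hi. lia.
Qed.

Lemma length_Zrange lo hi : length (Zrange lo hi) = Z.to_nat (hi - lo + 1).
Proof. unfold Zrange. rewrite length_map, length_seq. reflexivity. Qed.

Open Scope R_scope.

Fixpoint sumR (g : nat -> R) (B : nat) : R :=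
  match B with O => 0 | S B' => sumR g B' + g (S B') end.

Lemma len_flat_map_seq (V : Type) (f : nat -> list V) (g : nat -> R) (B : nat) :
  (forall b, (1 <= b <= B)%nat -> INR (length (f b)) <= g b) ->
  INR (length (flat_map f (seq 1 B))) <= sumR g B.
Proof.
  induction B as [|B IH]; intros H. simpl. lra.
  rewrite seq_S, flat_map_app, length_app, plus_INR. simpl sumR. simpl flat_map.
  rewrite app_nil_r. replace (1 + B)%nat with (S B) by lia.
  apply Rplus_le_compat. apply IH. intros; apply H; lia. apply H; lia.
Qed.

Lemma len_flat_map_const (A V : Type) (f : A -> list V) (l : list A) (M : R) :
  (forall a, In a l -> INR (length (f a)) <= M) ->
  INR (length (flat_map f l)) <= INR (length l) * M.
Proof.
  induction l as [|a l IH]; intros H. simpl. lra.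
  cbn [flat_map length]. rewrite length_app, plus_INR, S_INR.
  assert (H1 := H a (or_introl eq_refl)).
  assert (H2 : INR (length (flat_map f l)) <= INR (length l) * M).
  { apply IH. intros; apply H; right; auto. }
  lra.
Qed.

Lemma sumR_ext g1 g2 B : (forall b, (1 <= b <= B)%nat -> g1 b <= g2 b) -> sumR g1 B <= sumR g2 B.
Proof.
  induction B; intros H; simpl. lra.
  apply Rplus_le_compat. apply IHB; intros; apply H; lia. apply H; lia.
Qed.

Lemma sumR_lin (g1 g2 g3 : nat -> R) K1 K2 K3 B :
  sumR (fun b => K1 * g1 b + K2 * g2 b + K3 * g3 b) B =
  K1 * sumR g1 B + K2 * sumR g2 B + K3 * sumR g3 B.
Proof. induction B; simpl. ring. rewrite IHB. ring. Qed.

Lemma sumR_const K B : sumR (fun _ => K) B = INR B * K.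
Proof. induction B. simpl. ring. cbn [sumR]. rewrite IHB, S_INR. ring. Qed.

Lemma sumR_inv_sq B : sumR (fun b => / (INR b * INR b)) B <= 2 - 2 / (INR B + 1).
Proof.
  induction B. simpl. lra.
  cbn [sumR]. rewrite S_INR.
  assert (0 <= INR B) by apply pos_INR.
  assert (2 / (INR B + 1) - 2 / (INR B + 1 + 1) >= / ((INR B + 1) * (INR B + 1))).
  { replace (2 / (INR B + 1) - 2 / (INR B + 1 + 1)) with (/ ((INR B + 1) * ((INR B + 1 + 1)/2))) by (field; lra).
    apply Rle_ge, Rinv_le_contravar; nra. }
  lra.
Qed.

Lemma ln2_lt_1 : ln 2 < 1.
Proof.
  assert (H := exp_ineq1 1 ltac:(lra)).
  assert (ln 2 < ln (exp 1)) by (apply ln_increasing; lra).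
  rewrite ln_exp in H0. lra.
Qed.

Lemma ln_step x : 0 < x -> / (x + 1) <= ln (x + 1) - ln x.
Proof.
  intros Hx.
  assert (H := exp_ineq1_le (- / (x + 1))).
  assert (Hy : 1 + - / (x + 1) = x / (x + 1)) by (field; lra).
  rewrite Hy in H.
  assert (ln (x / (x + 1)) <= - / (x + 1)).
  { rewrite <- (ln_exp (- / (x+1))). destruct (Rle_lt_or_eq_dec _ _ H).
    left; apply ln_increasing; auto. apply Rdiv_lt_0_compat; lra. right; rewrite e; auto. }
  unfold Rdiv in H0. rewrite ln_mult, ln_Rinv in H0; try lra.
  apply Rinv_0_lt_compat; lra.
Qed.

Lemma sumR_harm B : (1 <= B)%nat -> sumR (fun b => / INR b) B <= 1 + ln (INR B).
Proof.
  induction B; intros H. lia.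
  destruct B. simpl. rewrite ln_1. lra.
  assert (IH := IHB ltac:(lia)).
  change (sumR (fun b => / INR b) (S (S B))) with (sumR (fun b => / INR b) (S B) + / INR (S (S B))).
  rewrite (S_INR (S B)).
  assert (0 < INR (S B)) by (apply lt_0_INR; lia).
  assert (Hs := ln_step (INR (S B)) H0). lra.
Qed.
Open Scope Z_scope.

Definition rpar (P A0 B0 x : Z) := ((x - A0)^2 + B0) mod P.
Definition inPm (Xm Ym P A0 B0 : Z) (z : pt) :=
  exists x, 0 <= x < P /\ z = (Xm + x, Ym - rpar P A0 B0 x).

Lemma sidon P A0 B0 x1 y1 x2 y2 : prime P -> 3 <= P ->
  0 <= x1 < P -> 0 <= y1 < P -> 0 <= x2 < P -> 0 <= y2 < P ->
  y1 - x1 = y2 - x2 -> 0 < y1 - x1 ->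
  rpar P A0 B0 x1 - rpar P A0 B0 y1 = rpar P A0 B0 x2 - rpar P A0 B0 y2 -> x1 = x2.
Proof.
  intros HP HP3 H1 H2 H3 H4 HD HDp Hr. unfold rpar in Hr.
  rewrite !Z.mod_eq in Hr by lia.
  set (D := y1 - x1) in *.
  assert (Hy1 : y1 = x1 + D) by lia. assert (Hy2 : y2 = x2 + D) by lia.
  rewrite Hy1, Hy2 in Hr.
  set (q1 := ((x1 - A0) ^ 2 + B0) / P) in Hr.
  set (q2 := ((x1 + D - A0) ^ 2 + B0) / P) in Hr.
  set (q3 := ((x2 - A0) ^ 2 + B0) / P) in Hr.
  set (q4 := ((x2 + D - A0) ^ 2 + B0) / P) in Hr.
  assert (Hdiv : (P | (2 * D) * (x2 - x1))).
  { exists (q1 - q2 - q3 + q4). clearbody q1 q2 q3 q4 D. ring_simplify in Hr. ring_simplify. lia. }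
  clear Hr. apply prime_mult in Hdiv; auto.
  destruct Hdiv as [Hd|Hd].
  - apply prime_mult in Hd; auto. destruct Hd as [Hd|Hd].
    + apply Z.divide_pos_le in Hd; lia.
    + apply Z.divide_pos_le in Hd; lia.
  - destruct Hd as [Q HQ]. clearbody D q1 q2 q3 q4. destruct (Z.lt_trichotomy Q 0) as [Hq|[Hq|Hq]].
    + assert (Q * P <= - P) by nia. lia.
    + subst Q. lia.
    + assert (Q * P >= P) by nia. lia.
Qed.

Lemma decomp Dx Dy Wx Wy : 0 < Dx -> Dx * Wy = Dy * Wx -> 0 < Wx -> 0 < Wy ->
  let g := Z.gcd Dx Dy in let a := Dx / g in let b := Dy / g in let k := Wx / a in
  0 < g /\ 0 < a /\ 0 < b /\ 0 < k /\ Dx = g * a /\ Dy = g * b /\ Wx = k * a /\ Wy = k * b.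
Proof.
  intros HDx Hc HWx HWy g a b k.
  assert (Hg0 : 0 <= g) by apply Z.gcd_nonneg.
  assert (Hgn : g <> 0). { intro H. apply Z.gcd_eq_0_l in H. lia. }
  assert (Hga : Dx = g * a).
  { unfold a. destruct (Z.gcd_divide_l Dx Dy) as [q Hq]. fold g in Hq.
    rewrite Hq at 2. rewrite Z.div_mul by lia. lia. }
  assert (Hgb : Dy = g * b).
  { unfold b. destruct (Z.gcd_divide_r Dx Dy) as [q Hq]. fold g in Hq.
    rewrite Hq at 2. rewrite Z.div_mul by lia. lia. }
  assert (Hapos : 0 < a) by nia.
  assert (Hcop : Z.gcd a b = 1) by (apply Z.gcd_div_gcd; auto).
  assert (Hab : a * Wy = b * Wx).
  { apply (Z.mul_reg_l _ _ g). lia. rewrite Z.mul_assoc, <- Hga, Z.mul_assoc, <- Hgb. lia. }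
  assert (Hdv : (a | Wx)). { apply Z.gauss with b. rewrite <- Hab. exists Wy; ring. auto. }
  destruct Hdv as [q Hq].
  assert (Hk : k = q). { unfold k. rewrite Hq. apply Z.div_mul. lia. }
  assert (HWyk : Wy = k * b). { apply (Z.mul_reg_l _ _ a). lia. rewrite Hab, Hq, Hk. ring. }
  assert (0 < k) by nia.
  assert (0 < b) by nia.
  repeat split; try lia.
Qed.

Definition img (t : pt * pt * pt) : (Z * Z) * (Z * Z) :=
  match t with (u, v, w) =>
    let Dx := fst v - fst u in let Dy := snd v - snd u in
    let g := Z.gcd Dx Dy in let a := Dx / g in
    ((Dy / g, a), (g, (fst w - fst u) / a)) end.

Definition l2 (P L1 U1 L2 U2 : Z) : list ((Z * Z) * (Z * Z)) :=
  flat_map (fun bn => let b := Z.of_nat bn in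
     flat_map (fun a => map (fun jk => ((b, a), jk))
        (list_prod (Zrange 1 ((P - 1) / a)) (Zrange ((L1 + a - 1) / a) (U1 / a))))
       (Zrange ((b * L1 + U2 - 1) / U2) ((b * U1) / L2)))
   (seq 1 (Z.to_nat (((P - 1) * U2) / L1))).

Lemma ceil_le x d a : 0 < d -> x <= a * d -> (x + d - 1) / d <= a.
Proof.
  intros Hd H. assert ((x + d - 1) / d < a + 1). apply Z.div_lt_upper_bound; lia. lia.
Qed.

Lemma count_main P A0 B0 Xm Ym Xn Yn Sn L1 U1 L2 U2 (T : pt * pt * pt -> Prop) k :
  prime P -> 3 <= P ->
  L1 = Xn - Xm - (P - 1) -> U1 = Xn + Sn - Xm -> L2 = Yn - Sn - Ym -> U2 = Yn - Ym + (P - 1) ->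
  0 < L1 -> 0 < L2 ->
  (forall u v w, T (u, v, w) -> ltlex u v /\ inPm Xm Ym P A0 B0 u /\ inPm Xm Ym P A0 B0 v /\
      (Xn <= fst w <= Xn + Sn /\ Yn - Sn <= snd w <= Yn) /\ collinear u v w) ->
  card_is T k -> (k <= length (l2 P L1 U1 L2 U2))%nat.
Proof.
  intros HP HP3 EL1 EU1 EL2 EU2 HL1 HL2 HT Hk.
  assert (Hr : forall x, 0 <= rpar P A0 B0 x < P). { intros; apply Z.mod_pos_bound; lia. }
  assert (Key : forall u v w, T (u, v, w) ->
     exists x1 y1, 0 <= x1 < P /\ 0 <= y1 < P /\ x1 < y1 /\
       u = (Xm + x1, Ym - rpar P A0 B0 x1) /\ v = (Xm + y1, Ym - rpar P A0 B0 y1) /\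
       L1 <= fst w - fst u <= U1 /\ L2 <= snd w - snd u <= U2 /\
       (fst v - fst u) * (snd w - snd u) = (snd v - snd u) * (fst w - fst u)).
  { intros u v w Ht. destruct (HT u v w Ht) as [Hlt [[x1 [Hx1 Hu]] [[y1 [Hy1 Hv]] [Hw Hcol]]]].
    exists x1, y1. subst u v. unfold ltlex, collinear in *. simpl in *.
    assert (x1 < y1).
    { destruct Hlt as [Hlt|[Heq Hlt]]. lia. assert (x1 = y1) by lia. subst. lia. }
    assert (H1 := Hr x1). assert (H2 := Hr y1).
    repeat split; try lia. }
  apply (card_inj _ _ T k img _ Hk).
  - intros [[u v] w] Ht.
    destruct (Key u v w Ht) as [x1 [y1 [Hx1 [Hy1 [Hxy [Hu [Hv [HWx [HWy Hc]]]]]]]]].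
    assert (HDx0 : 0 < fst v - fst u) by (subst u v; simpl; lia).
    assert (HD := decomp _ _ _ _ HDx0 Hc ltac:(lia) ltac:(lia)). cbv zeta in HD.
    unfold img.
    set (Dx := fst v - fst u) in *. set (Dy := snd v - snd u) in *.
    set (g := Z.gcd Dx Dy) in *. set (a := Dx / g) in *. set (b := Dy / g) in *.
    set (kk := (fst w - fst u) / a) in *.
    destruct HD as [Hg [Ha [Hb [Hkp [HDx [HDy [HWxe HWye]]]]]]].
    assert (HDxb : Dx <= P - 1) by (unfold Dx; rewrite Hu, Hv; simpl; lia).
    unfold l2. apply in_flat_map. exists (Z.to_nat b). split.
    { apply in_seq. split. lia.
      assert (b <= (P - 1) * U2 / L1).
      { apply Z.div_le_lower_bound. lia.
        assert (b * L1 <= b * (kk * a)) by (apply Z.mul_le_mono_nonneg_l; lia).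
        assert (a * (kk * b) <= a * U2) by (apply Z.mul_le_mono_nonneg_l; lia).
        assert (a <= P - 1) by nia.
        assert (a * U2 <= (P - 1) * U2) by (apply Z.mul_le_mono_nonneg_r; lia).
        nia. }
      lia. }
    rewrite Z2Nat.id by lia.
    apply in_flat_map. exists a. split.
    { apply In_Zrange. split.
      - apply ceil_le. lia.
        assert (b * L1 <= b * (kk * a)) by (apply Z.mul_le_mono_nonneg_l; lia).
        assert (a * (kk * b) <= a * U2) by (apply Z.mul_le_mono_nonneg_l; lia).
        nia.
      - apply Z.div_le_lower_bound. lia.
        assert (a * L2 <= a * (kk * b)) by (apply Z.mul_le_mono_nonneg_l; lia).
        assert (b * (kk * a) <= b * U1) by (apply Z.mul_le_mono_nonneg_l; lia).
        nia. }
    apply in_map_iff. exists (g, kk). split. reflexivity.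
    apply in_prod_iff. split; apply In_Zrange; split.
    + lia.
    + apply Z.div_le_lower_bound. lia. nia.
    + apply ceil_le. lia. lia.
    + apply Z.div_le_lower_bound. lia. nia.
  - intros [[u1 v1] w1] [[u2 v2] w2] Ht1 Ht2 Himg.
    destruct (Key u1 v1 w1 Ht1) as [x1 [y1 [Hx1 [Hy1 [Hxy1 [Hu1 [Hv1 [HWx1 [HWy1 Hc1]]]]]]]]].
    destruct (Key u2 v2 w2 Ht2) as [x2 [y2 [Hx2 [Hy2 [Hxy2 [Hu2 [Hv2 [HWx2 [HWy2 Hc2]]]]]]]]].
    assert (HX1 : 0 < fst v1 - fst u1) by (subst u1 v1; simpl; lia).
    assert (HX2 : 0 < fst v2 - fst u2) by (subst u2 v2; simpl; lia).
    assert (HD1 := decomp _ _ _ _ HX1 Hc1 ltac:(lia) ltac:(lia)).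
    assert (HD2 := decomp _ _ _ _ HX2 Hc2 ltac:(lia) ltac:(lia)).
    cbv zeta in HD1, HD2. unfold img in Himg.
    set (g1 := Z.gcd (fst v1 - fst u1) (snd v1 - snd u1)) in *.
    set (g2 := Z.gcd (fst v2 - fst u2) (snd v2 - snd u2)) in *.
    set (a1 := (fst v1 - fst u1) / g1) in *. set (a2 := (fst v2 - fst u2) / g2) in *.
    set (b1 := (snd v1 - snd u1) / g1) in *. set (b2 := (snd v2 - snd u2) / g2) in *.
    set (k1 := (fst w1 - fst u1) / a1) in *. set (k2 := (fst w2 - fst u2) / a2) in *.
    injection Himg. clear Himg.
    destruct HD1 as [Hg1 [Ha1 [Hb1 [Hk1 [HDx1 [HDy1 [HWxe1 HWye1]]]]]]].
    destruct HD2 as [Hg2 [Ha2 [Hb2 [Hk2 [HDx2 [HDy2 [HWxe2 HWye2]]]]]]].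
    clearbody g1 g2 a1 a2 b1 b2 k1 k2.
    intros. subst.
    assert (Hx : x1 = x2).
    { apply (sidon P A0 B0 x1 y1 x2 y2); auto; simpl in *; lia. }
    subst x2. simpl in *. assert (y1 = y2) by lia. subst y2.
    destruct w1 as [w1x w1y]; destruct w2 as [w2x w2y]. simpl in *.
    assert (w1x = w2x) by lia. assert (w1y = w2y) by lia. subst. reflexivity.
Qed.
Open Scope R_scope.

Lemma Rdiv_le_0_compat a b : 0 <= a -> 0 < b -> 0 <= a / b.
Proof. intros. unfold Rdiv. apply Rmult_le_pos; auto. left; apply Rinv_0_lt_compat; auto. Qed.

Lemma INR_Zto_nat_le z y : IZR z <= y -> 0 <= y -> INR (Z.to_nat z) <= y.
Proof.
  intros H1 H2. destruct (Z.le_gt_cases 0 z).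
  - rewrite INR_IZR_INZ, Z2Nat.id; auto.
  - replace (Z.to_nat z) with 0%nat by lia. simpl. auto.
Qed.

Lemma div_floor_R x d : (0 < d)%Z -> IZR (x / d) <= IZR x / IZR d.
Proof.
  intros Hd. assert (H := Z.mul_div_le x d Hd).
  apply IZR_le in H. rewrite mult_IZR in H.
  assert (0 < IZR d) by (apply IZR_lt; auto).
  apply Rmult_le_reg_l with (IZR d); auto. field_simplify; lra.
Qed.

Lemma div_ceil_R x d : (0 < d)%Z -> IZR x / IZR d <= IZR ((x + d - 1) / d).
Proof.
  intros Hd. assert (H := Z.mul_succ_div_gt (x + d - 1) d Hd).
  assert (H' : (x <= d * ((x + d - 1) / d))%Z) by lia.
  apply IZR_le in H'. rewrite mult_IZR in H'.
  assert (0 < IZR d) by (apply IZR_lt; auto).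
  apply Rmult_le_reg_l with (IZR d); auto. field_simplify; lra.
Qed.

Lemma len_l2_bound (P L1 U1 L2 U2 : Z) :
  (3 <= P)%Z -> (0 < L1 <= U1)%Z -> (0 < L2 <= U2)%Z -> (U1 - L1 = U2 - L2)%Z ->
  let p := IZR P in let l1 := IZR L1 in let u1 := IZR U1 in let l2r := IZR L2 in let u2 := IZR U2 in
  let al := l1 / u2 in let ga := u1 / l2r - l1 / u2 in let De := u1 - l1 in
  let Bn := Z.to_nat (((P - 1) * U2) / L1) in
  INR (length (l2 P L1 U1 L2 U2)) <=
    (p * ga * De / (al * al) + p / al) * sumR (fun b => / INR b) Bn
    + (p * ga / al) * INR Bn
    + (p * De / (al * al)) * sumR (fun b => / (INR b * INR b)) Bn.
Proof.
  intros HP HL1 HL2 HD p l1 u1 l2r u2 al ga De Bn.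
  assert (Hp : 3 <= p) by (apply IZR_le; auto).
  assert (Hl1 : 0 < l1) by (apply IZR_lt; lia).
  assert (Hu1 : l1 <= u1) by (apply IZR_le; lia).
  assert (Hl2 : 0 < l2r) by (apply IZR_lt; lia).
  assert (Hu2 : l2r <= u2) by (apply IZR_le; lia).
  assert (HU2r : 0 < IZR U2) by (apply IZR_lt; lia).
  assert (HL2r : 0 < IZR L2) by (apply IZR_lt; lia).
  assert (HL1r : 0 < IZR L1) by (apply IZR_lt; lia).
  assert (HDe : De = u2 - l2r) by (unfold De, u1, l1, u2, l2r; rewrite <- !minus_IZR; f_equal; lia).
  assert (Hal : 0 < al) by (unfold al; apply Rdiv_lt_0_compat; lra).
  assert (Hga : 0 <= ga).
  { unfold ga. assert (l1 / u2 <= u1 / l2r); [|lra].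
    apply Rmult_le_reg_r with (l2r * u2). nra.
    replace (l1 / u2 * (l2r * u2)) with (l1 * l2r) by (field; lra).
    replace (u1 / l2r * (l2r * u2)) with (u1 * u2) by (field; lra). nra. }
  assert (HDe0 : 0 <= De) by lra.
  unfold l2.
  eapply Rle_trans.
  { apply (len_flat_map_seq _ _ (fun b => (INR b * ga + 1) * ((p / (INR b * al)) * (De / (INR b * al) + 1)))).
    intros bn Hbn. cbv zeta.
    set (b := Z.of_nat bn).
    assert (Hb : 1 <= INR bn) by (apply (le_INR 1); lia).
    assert (HbZ : IZR b = INR bn) by (unfold b; rewrite INR_IZR_INZ; auto).
    assert (Hx : 0 < INR bn * al) by nra.
    eapply Rle_trans. apply len_flat_map_const with (M := (p / (INR bn * al)) * (De / (INR bn * al) + 1)).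
    - intros a Ha. apply In_Zrange_inv in Ha.
      assert (Ha1 : INR bn * al <= IZR a).
      { assert (H1 := div_ceil_R (b * L1) U2 ltac:(lia)).
        assert (H2 : IZR ((b * L1 + U2 - 1) / U2) <= IZR a) by (apply IZR_le; lia).
        rewrite mult_IZR, HbZ in H1. unfold al, l1, u2.
        replace (INR bn * (IZR L1 / IZR U2)) with (INR bn * IZR L1 / IZR U2) by (field; lra). lra. }
      assert (Hapos : (0 < a)%Z). { apply lt_IZR. lra. }
      assert (Har : 0 < IZR a) by lra.
      rewrite length_map, length_prod, mult_INR, !length_Zrange.
      assert (HJ : INR (Z.to_nat ((P - 1) / a - 1 + 1)) <= p / IZR a).
      { apply INR_Zto_nat_le.
        - replace ((P - 1) / a - 1 + 1)%Z with ((P - 1) / a)%Z by lia.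
          eapply Rle_trans. apply div_floor_R; auto. rewrite minus_IZR.
          unfold Rdiv. apply Rmult_le_compat_r. left; apply Rinv_0_lt_compat; auto. unfold p; lra.
        - apply Rdiv_le_0_compat; lra. }
      assert (HK : INR (Z.to_nat (U1 / a - (L1 + a - 1) / a + 1)) <= De / IZR a + 1).
      { apply INR_Zto_nat_le.
        - rewrite plus_IZR, minus_IZR.
          assert (H1 := div_floor_R U1 a Hapos). assert (H2 := div_ceil_R L1 a Hapos).
          unfold De, u1, l1. replace ((IZR U1 - IZR L1) / IZR a) with (IZR U1 / IZR a - IZR L1 / IZR a) by (field; lra).
          lra.
        - assert (0 <= De / IZR a) by (apply Rdiv_le_0_compat; lra). lra. }
      assert (HJ0 : 0 <= INR (Z.to_nat ((P - 1) / a - 1 + 1))) by apply pos_INR.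
      assert (HK0 : 0 <= INR (Z.to_nat (U1 / a - (L1 + a - 1) / a + 1))) by apply pos_INR.
      eapply Rle_trans. apply Rmult_le_compat; eauto.
      apply Rmult_le_compat.
      + apply Rdiv_le_0_compat; lra.
      + assert (0 <= De / IZR a) by (apply Rdiv_le_0_compat; lra). lra.
      + unfold Rdiv. apply Rmult_le_compat_l. lra. apply Rinv_le_contravar; lra.
      + apply Rplus_le_compat_r. unfold Rdiv. apply Rmult_le_compat_l. lra. apply Rinv_le_contravar; lra.
    - assert (HM : 0 <= (p / (INR bn * al)) * (De / (INR bn * al) + 1)).
      { apply Rmult_le_pos. apply Rdiv_le_0_compat; lra.
        assert (0 <= De / (INR bn * al)) by (apply Rdiv_le_0_compat; lra). lra. }
      apply Rmult_le_compat_r; auto.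
      rewrite length_Zrange. apply INR_Zto_nat_le.
      + rewrite plus_IZR, minus_IZR.
        assert (H1 := div_floor_R (b * U1) L2 ltac:(lia)).
        assert (H2 := div_ceil_R (b * L1) U2 ltac:(lia)).
        rewrite !mult_IZR, HbZ in *. unfold ga, u1, l2r, l1, u2.
        replace (INR bn * (IZR U1 / IZR L2 - IZR L1 / IZR U2)) with
          (INR bn * IZR U1 / IZR L2 - INR bn * IZR L1 / IZR U2) by (field; lra).
        lra.
      + assert (0 <= INR bn * ga) by nra. lra. }
  apply Req_le.
  replace ((p * ga / al) * INR Bn) with ((p * ga / al) * sumR (fun _ => 1) Bn) by (rewrite sumR_const; ring).
  rewrite <- sumR_lin.
  apply Rle_antisym; apply sumR_ext; intros b Hb;
  assert (0 < INR b) by (apply lt_0_INR; lia); right; field; split; lra.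
Qed.
Open Scope R_scope.

Lemma div_le k a d : 0 < d -> a <= k * d -> a / d <= k.
Proof. intros Hd H. apply Rmult_le_reg_r with d; auto. unfold Rdiv. rewrite Rmult_assoc, Rinv_l; lra. Qed.

Lemma prod_le4 a b c d a' b' c' d' : 0 <= a <= a' -> 0 <= b <= b' -> 0 <= c <= c' -> 0 <= d <= d' ->
  a * b * c * d <= a' * b' * c' * d'.
Proof.
  intros. assert (0 <= a*b) by nra. assert (a*b <= a'*b') by (apply Rmult_le_compat; lra).
  assert (0<= a*b*c) by nra. assert (a*b*c <= a'*b'*c') by (apply Rmult_le_compat; lra).
  apply Rmult_le_compat; lra.
Qed.

Lemma Rdiv_le_0_compat' a b : 0 <= a -> 0 < b -> 0 <= a / b.
Proof. intros. unfold Rdiv. apply Rmult_le_pos; auto. left; apply Rinv_0_lt_compat; auto. Qed.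

Lemma final_ineq (p Fm Fn X n r c l1 u1 l2 u2 B H H2 : R) :
  0 < p < Fm -> Fm <= 2/3 * Fn -> Fn * (c * n * r) = X ->
  0 <= u1 - l1 -> u1 - l1 = u2 - l2 -> u1 - l1 <= 5/3 * Fn ->
  (49/100) * X <= l1 -> (2/5) * X <= l2 * r -> u2 * r <= (101/100) * X -> 0 < X ->
  42 <= r -> 29 * c <= r -> 12 <= c -> 10 <= n -> 5 * c * c * n * n * r <= X ->
  0 <= B <= p * u2 / l1 -> 0 <= H <= n -> 0 <= H2 <= 2 ->
  let al := l1 / u2 in let ga := u1 / l2 - l1 / u2 in let De := u1 - l1 in
  (p * ga * De / (al * al) + p / al) * H + (p * ga / al) * B + (p * De / (al * al)) * H2
    <= 8 * Fm * Fn / (c * r).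
Proof.
  intros Hp HFm HFn HD0 HDe HD53 Hl1 Hl2 Hu2 HX Hr42 Hrc Hc Hn HXb HB HH HH2 al ga De.
  assert (Hu1 : u1 = l1 + u2 - l2) by lra. subst u1.
  assert (Hr : 0 < r) by lra.
  assert (Hl1p : 0 < l1) by lra.
  assert (Hl2p : 0 < l2) by nra.
  assert (Hu2p : 0 < u2) by lra.
  assert (HFn0 : 0 < Fn) by lra.
  assert (Hcr : 0 < c * r) by nra.
  assert (Hinv : / (c * r) = Fn * n / X).
  { rewrite <- HFn. field. repeat split; nra. }
  assert (EA : (p * ga * De / (al * al)) * H = p * (De * De) * ((u2 + l1) / l1) * (u2 / l2) * (H / l1)).
  { unfold ga, al, De. field; repeat split; lra. }
  assert (ED : (p / al) * H = p * (u2 / l1) * H).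
  { unfold al. field; repeat split; lra. }
  assert (EB : (p * ga / al) * B = p * De * ((u2 + l1) / l1) * (B / l2)).
  { unfold ga, al, De. field; repeat split; lra. }
  assert (EC : (p * De / (al * al)) * H2 = p * De * (u2 / l1) * (u2 / l1) * H2).
  { unfold al. field; repeat split; lra. }
  assert (b1 : (u2 + l1) / l1 <= (21/20)).
  { apply div_le; auto. assert (u2 * 42 <= u2 * r) by nra. lra. }
  assert (b2 : u2 / l2 <= (21/20)).
  { apply div_le; auto.
    assert (Hcnr : 0 < c * n * r) by (repeat apply Rmult_lt_0_compat; lra).
    assert (HD1 : De * (c * n * r) <= 5/3 * X).
    { rewrite <- HFn. replace (5/3 * (Fn*(c*n*r))) with ((5/3*Fn)*(c*n*r)) by ring.
      apply Rmult_le_compat_r; unfold De; lra. }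
    assert (De * r * 120 <= De * (c * n * r)).
    { assert (c * n >= 120) by nra. replace (De * (c * n * r)) with (De * r * (c * n)) by ring.
      apply Rmult_le_compat_l. apply Rmult_le_pos; unfold De; lra. lra. }
    assert (De * r <= (1/20) * l2 * r) by lra.
    assert (De <= (1/20) * l2) by (apply Rmult_le_reg_r with r; lra).
    unfold De in *. lra. }
  assert (b3 : H / l1 <= n / ((49/100) * X)).
  { apply div_le; auto. unfold Rdiv. rewrite Rmult_assoc.
    assert (n * (/ ((49/100) * X) * l1) >= n); [|nra].
    assert (/ ((49/100) * X) * l1 >= 1); [|nra].
    apply Rle_ge. rewrite <- (Rinv_l ((49/100) * X)) by lra. apply Rmult_le_compat_l; try lra.
    left; apply Rinv_0_lt_compat; lra. }
  assert (b5 : u2 / l1 <= (207/100) / r).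
  { apply div_le; auto. unfold Rdiv.
    assert ((207/100) * / r * l1 >= (207/100) * / r * ((49/100) * X)) by (apply Rle_ge, Rmult_le_compat_l; [left; apply Rmult_lt_0_compat; [lra| apply Rinv_0_lt_compat; lra]|lra]).
    assert (u2 <= (101/100) * X * / r). { apply Rmult_le_reg_r with r; auto. rewrite Rmult_assoc, Rinv_l; lra. }
    assert ((207/100) * / r * ((49/100) * X) >= (101/100) * X * / r) by (assert (0 < / r) by (apply Rinv_0_lt_compat; lra); nra).
    lra. }
  assert (b6 : B / l2 <= p * (21/20) / ((49/100) * X)).
  { assert (B / l2 <= p / l1 * (u2 / l2)).
    { replace (p / l1 * (u2 / l2)) with ((p * u2 / l1) * / l2) by (field; lra).
      unfold Rdiv at 1. apply Rmult_le_compat_r. left; apply Rinv_0_lt_compat; auto. lra. }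
    assert (p / l1 <= p / ((49/100) * X)).
    { unfold Rdiv. apply Rmult_le_compat_l. lra. apply Rinv_le_contravar; lra. }
    assert (p / l1 * (u2 / l2) <= p / ((49/100) * X) * (21/20)).
    { apply Rmult_le_compat; try lra. apply Rdiv_le_0_compat'; lra. apply Rdiv_le_0_compat'; lra. }
    replace (p * (21/20) / ((49/100) * X)) with (p / ((49/100) * X) * (21/20)) by (field; lra). lra. }
  assert (Hcnr : 0 < c * n * r) by (repeat apply Rmult_lt_0_compat; lra).
  assert (HFn' : Fn = X / (c * n * r)) by (rewrite <- HFn; field; lra).
  set (Q := p * Fn / (c * r)).
  assert (HQ : Q = p * Fn * (Fn * n / X)) by (unfold Q; unfold Rdiv at 1; rewrite Hinv; reflexivity).
  assert (HDe0 : 0 <= De) by (unfold De; lra).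
  assert (HDe53 : De <= 5/3 * Fn) by (unfold De; lra).
  assert (Hρ1 : 0 <= (u2 + l1) / l1) by (apply Rdiv_le_0_compat'; lra).
  assert (Hρ2 : 0 <= u2 / l2) by (apply Rdiv_le_0_compat'; lra).
  assert (Ht : 0 <= H / l1) by (apply Rdiv_le_0_compat'; lra).
  assert (Hσ : 0 <= u2 / l1) by (apply Rdiv_le_0_compat'; lra).
  assert (HBl : 0 <= B / l2) by (apply Rdiv_le_0_compat'; lra).
  assert (TA : p * (De * De) * ((u2 + l1) / l1) * (u2 / l2) * (H / l1) <= (25/4) * Q).
  { eapply Rle_trans. apply (prod_le4 (p * (De * De)) _ _ _ (p * (25/9 * Fn * Fn)) (21/20) (21/20) (n / ((49/100) * X))).
    split. nra. apply Rmult_le_compat_l; nra. lra. lra. lra.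
    rewrite HQ. right. field. lra. }
  assert (TD : p * (u2 / l1) * H <= (1/2) * Q).
  { assert (p * (u2 / l1) * H <= p * ((207/100) / r) * n).
    { apply Rmult_le_compat; try nra; apply Rmult_le_pos; lra. }
    assert ((207/100) / r * n <= (1/2) * (Fn / (c * r))).
    { replace ((207/100) / r * n) with (((207/100) * (c * c * n * n * r)) * / (c * c * n * r * r)) by (field; lra).
      replace ((1/2) * (Fn / (c * r))) with (((1/2) * X) * / (c * c * n * r * r)) by (rewrite HFn'; field; lra).
      apply Rmult_le_compat_r. left; apply Rinv_0_lt_compat; repeat apply Rmult_lt_0_compat; lra.
      assert (0 <= c * c * n * n * r) by (repeat apply Rmult_le_pos; lra). lra. }
    unfold Q. replace ((1/2) * (p * Fn / (c * r))) with (p * ((1/2) * (Fn / (c * r)))) by (field; lra).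
    assert (p * ((207/100) / r * n) <= p * ((1/2) * (Fn / (c * r)))) by (apply Rmult_le_compat_l; lra).
    replace (p * ((207/100) / r) * n) with (p * ((207/100) / r * n)) in * by ring. lra. }
  assert (TB : p * De * ((u2 + l1) / l1) * (B / l2) <= (1/4) * Q).
  { assert (p * (21/20) / ((49/100) * X) <= 2/3 * Fn * (21/20) / ((49/100) * X)).
    { unfold Rdiv. apply Rmult_le_compat_r. left; apply Rinv_0_lt_compat; lra. lra. }
    eapply Rle_trans. apply (prod_le4 p De _ _ p (5/3 * Fn) (21/20) (2/3 * Fn * (21/20) / ((49/100) * X))).
    lra. lra. lra. lra.
    rewrite HQ. replace (p * (5 / 3 * Fn) * (21/20) * (2 / 3 * Fn * (21/20) / ((49/100) * X))) with
      (p * Fn * (Fn / X) * (5/2)) by (field; lra).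
    replace ((1/4) * (p * Fn * (Fn * n / X))) with (p * Fn * (Fn / X) * ((1/4) * n)) by (field; lra).
    apply Rmult_le_compat_l. apply Rmult_le_pos. nra. apply Rdiv_le_0_compat'; lra. lra. }
  assert (TC : p * De * (u2 / l1) * (u2 / l1) * H2 <= (1/2) * Q).
  { eapply Rle_trans. apply (prod_le4 (p * De) _ _ _ (p * (5/3 * Fn)) ((207/100) / r) ((207/100) / r) 2).
    split. nra. apply Rmult_le_compat_l; lra. lra. lra. lra.
    unfold Q. replace (p * (5 / 3 * Fn) * ((207/100) / r) * ((207/100) / r) * 2) with (p * Fn * ((5/3*2*(207/100)*(207/100)) / (r * r))) by (field; lra).
    replace ((1/2) * (p * Fn / (c * r))) with (p * Fn * ((1/2) / (c * r))) by (field; lra).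
    apply Rmult_le_compat_l. nra.
    replace (5 / 3 * 2 * (207/100) * (207/100) / (r * r)) with ((5 / 3 * 2 * (207/100) * (207/100) * c) * / (c * r * r)) by (field; lra).
    replace ((1/2) / (c * r)) with (((1/2) * r) * / (c * r * r)) by (field; lra).
    apply Rmult_le_compat_r. left; apply Rinv_0_lt_compat; repeat apply Rmult_lt_0_compat; lra. lra. }
  assert (HQ8 : (15/2) * Q <= 8 * Fm * Fn / (c * r)).
  { unfold Q. replace (8 * Fm * Fn / (c * r)) with (8 * Fm * (Fn / (c * r))) by (field; lra).
    replace ((15/2) * (p * Fn / (c * r))) with ((15/2) * p * (Fn / (c * r))) by (field; lra).
    apply Rmult_le_compat_r. apply Rdiv_le_0_compat'; lra. lra. }
  rewrite Rmult_plus_distr_r, EA, ED, EB, EC. lra.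
Qed.
Open Scope R_scope.

Lemma ln_le_ a b : 0 < a -> a <= b -> ln a <= ln b.
Proof. intros. destruct (Rle_lt_or_eq_dec _ _ H0). left; apply ln_increasing; auto. subst; lra. Qed.

Lemma Rpower_pos x e : 0 < Rpower x e.
Proof. unfold Rpower. apply exp_pos. Qed.

Lemma Rpower_bounds x e : 1 <= x -> 0 <= e <= 1 -> 1 <= Rpower x e <= x.
Proof.
  intros Hx He. split.
  - rewrite <- (Rpower_O x) by lra. apply Rle_Rpower; lra.
  - rewrite <- (Rpower_1 x) at 2 by lra. apply Rle_Rpower; lra.
Qed.

Section S.
Variable eps : R.
Hypothesis Heps : 0 < eps < 1.

Definition rr (k : nat) := Rpower (INR k) eps.
Definition FF (k : nat) := 2 ^ k / (INR k * rr k).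
Definition GG (k : nat) := 2 ^ k / rr k.

Lemma rr_bounds k : (1 <= k)%nat -> 1 <= rr k <= INR k.
Proof. intros. apply Rpower_bounds. apply (le_INR 1); auto. lra. Qed.

Lemma rr_step k : (1 <= k)%nat -> rr (S k) <= rr k * (INR (S k) / INR k).
Proof.
  intros Hk. unfold rr.
  assert (H1 : 1 <= INR k) by (apply (le_INR 1); auto).
  assert (E : INR (S k) = INR k * (INR (S k) / INR k)) by (field; lra).
  rewrite E at 1. rewrite <- Rpower_mult_distr; try lra.
  apply Rmult_le_compat_l. left; apply Rpower_pos.
  apply Rpower_bounds. rewrite S_INR. apply (Rmult_le_reg_r (INR k)). lra.
  field_simplify; lra. lra.
  rewrite S_INR. apply Rdiv_lt_0_compat; lra.
Qed.

Lemma frac_le u v d1 d2 : 0 < d1 -> 0 < d2 -> u * d2 <= v * d1 -> u / d1 <= v / d2.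
Proof.
  intros H1 H2 H. apply (Rmult_le_reg_r (d1 * d2)). nra.
  replace (u / d1 * (d1 * d2)) with (u * d2) by (field; lra).
  replace (v / d2 * (d1 * d2)) with (v * d1) by (field; lra). auto.
Qed.

Lemma INR_lb (n k : nat) : (n <= k)%nat -> IZR (Z.of_nat n) <= INR k.
Proof. intros H. rewrite <- INR_IZR_INZ. apply le_INR; auto. Qed.

Lemma FF_step k : (7 <= k)%nat -> 3/2 * FF k <= FF (S k).
Proof.
  intros Hk. unfold FF.
  assert (H7 := INR_lb 7 k Hk). change (Z.of_nat 7) with 7%Z in H7.
  assert (Hr := rr_bounds k ltac:(lia)).
  assert (Hr1 := rr_bounds (S k) ltac:(lia)).
  assert (Hs := rr_step k ltac:(lia)).
  rewrite S_INR in *. simpl pow.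
  assert (H2 : 0 < 2 ^ k) by (apply pow_lt; lra).
  set (a := rr k) in *. set (b := rr (S k)) in *. set (x := INR k) in *. set (t := 2 ^ k) in *.
  assert (Hb : b * x <= a * (x + 1)).
  { apply (Rmult_le_compat_r x) in Hs; [|lra]. replace (a * ((x + 1) / x) * x) with (a * (x + 1)) in Hs by (field; lra). lra. }
  replace (3/2 * (t / (x * a))) with ((3/2 * t) / (x * a)) by (field; lra).
  apply frac_le. nra. nra.
  assert (3 * (x+1) * (x+1) <= 4 * x * x) by nra.
  assert (3 * t * (x+1) * b * x <= 4 * t * x * a * x).
  { assert (3 * t * (x+1) * (b * x) <= 3 * t * (x+1) * (a * (x+1))) by (apply Rmult_le_compat_l; nra).
    assert (t * a * (3 * (x+1) * (x+1)) <= t * a * (4 * x * x)) by (apply Rmult_le_compat_l; nra).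
    nra. }
  assert (3 * t * (x+1) * b <= 4 * t * x * a) by (apply (Rmult_le_reg_r x); nra).
  nra.
Qed.

Lemma GG_step k : (9 <= k)%nat -> 9/5 * GG k <= GG (S k).
Proof.
  intros Hk. unfold GG.
  assert (H7 := INR_lb 9 k Hk). change (Z.of_nat 9) with 9%Z in H7.
  assert (Hr := rr_bounds k ltac:(lia)).
  assert (Hr1 := rr_bounds (S k) ltac:(lia)).
  assert (Hs := rr_step k ltac:(lia)).
  rewrite S_INR in *. simpl pow.
  assert (H2 : 0 < 2 ^ k) by (apply pow_lt; lra).
  set (a := rr k) in *. set (b := rr (S k)) in *. set (x := INR k) in *. set (t := 2 ^ k) in *.
  assert (Hb : b * x <= a * (x + 1)).
  { apply (Rmult_le_compat_r x) in Hs; [|lra]. replace (a * ((x + 1) / x) * x) with (a * (x + 1)) in Hs by (field; lra). lra. }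
  replace (9/5 * (t / a)) with ((9/5 * t) / a) by (field; lra).
  apply frac_le. nra. nra.
  assert (9 * t * b * x <= 10 * t * a * x).
  { assert (9 * t * (b * x) <= 9 * t * (a * (x+1))) by (apply Rmult_le_compat_l; nra).
    assert (0 <= t * a * (x - 9)) by (apply Rmult_le_pos; nra).
    nra. }
  assert (9 * t * b <= 10 * t * a) by (apply (Rmult_le_reg_r x); nra).
  nra.
Qed.

Lemma FF_pos k : (1 <= k)%nat -> 0 < FF k.
Proof.
  intros. unfold FF. assert (H1 := rr_bounds k H). assert (1 <= INR k) by (apply (le_INR 1); auto).
  apply Rdiv_lt_0_compat. apply pow_lt; lra. nra.
Qed.

Lemma GG_pos k : (1 <= k)%nat -> 0 < GG k.
Proof.
  intros. unfold GG. assert (H1 := rr_bounds k H).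
  apply Rdiv_lt_0_compat. apply pow_lt; lra. lra.
Qed.

Lemma FF_mono m n : (7 <= m)%nat -> (m < n)%nat -> 3/2 * FF m <= FF n.
Proof.
  intros Hm Hmn. induction n. lia.
  destruct (Nat.eq_dec m n). subst. apply FF_step; auto.
  assert (IH := IHn ltac:(lia)). assert (H := FF_step n ltac:(lia)).
  assert (0 < FF n) by (apply FF_pos; lia). lra.
Qed.

Lemma GG_mono m n : (9 <= m)%nat -> (m < n)%nat -> 9/5 * GG m <= GG n.
Proof.
  intros Hm Hmn. induction n. lia.
  destruct (Nat.eq_dec m n). subst. apply GG_step; auto.
  assert (IH := IHn ltac:(lia)). assert (H := GG_step n ltac:(lia)).
  assert (0 < GG n) by (apply GG_pos; lia). lra.
Qed.

End S.

Lemma pow2_ge (n : nat) : (16 <= n)%nat -> INR n ^ 4 <= 2 ^ n.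
Proof.
  intros Hn. replace n with (16 + (n - 16))%nat by lia. generalize (n - 16)%nat. clear n Hn.
  induction n.
  - replace (16 + 0)%nat with 16%nat by lia. simpl. lra.
  - replace (16 + S n)%nat with (S (16 + n)) by lia.
    rewrite S_INR. change (2 ^ S (16 + n)) with (2 * 2 ^ (16 + n)). set (x := INR (16 + n)) in *.
    assert (Hx : 16 <= x). { unfold x. assert (H := INR_lb 16 (16 + n) ltac:(lia)). exact H. }
    assert ((x + 1) ^ 4 <= (17/16 * x) ^ 4) by (apply pow_incr; lra).
    rewrite Rpow_mult_distr in H.
    assert (0 <= x ^ 4) by (apply pow_le; lra).
    assert ((17/16) ^ 4 <= 2) by (simpl; lra).
    assert ((17/16)^4 * x^4 <= 2 * x^4) by (apply Rmult_le_compat_r; lra).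
    lra.
Qed.

Lemma bigN eps c : 0 < eps < 1 -> 12 <= c -> exists N : nat, forall n, (N <= n)%nat ->
  (16 <= n)%nat /\ 5 * c * c <= INR n /\ 42 <= rr eps n /\ 29 * c <= rr eps n.
Proof.
  intros He Hc.
  set (K := 42 + 29 * c). set (M := Rpower K (/ eps)).
  assert (HM : 0 < M) by apply Rpower_pos.
  destruct (INR_archimed 1 (M + 5 * c * c + 16) ltac:(lra)) as [N HN].
  exists N. intros n Hn. apply le_INR in Hn.
  assert (Hn' : M + 5 * c * c + 16 < INR n) by lra. assert (0 <= 5 * c * c) by nra.
  split; [|split; [lra|]].
  - apply INR_lt. rewrite (INR_IZR_INZ 15). change (Z.of_nat 15) with 15%Z. lra.
  - assert (K <= rr eps n); [|unfold K in *; lra].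
    unfold rr. replace K with (Rpower M eps).
    + apply Rle_Rpower_l. lra. lra.
    + unfold M. rewrite Rpower_mult. replace (/ eps * eps) with 1 by (field; lra).
      apply Rpower_1. unfold K; lra.
Qed.
Open Scope R_scope.

Lemma sumR_nonneg g B : (forall b, (1 <= b <= B)%nat -> 0 <= g b) -> 0 <= sumR g B.
Proof.
  intros H. assert (H0 := sumR_ext (fun _ => 0) g B H). rewrite sumR_const in H0. lra.
Qed.

Definition ptt_dec : forall x y : pt * pt * pt, {x = y} + {x <> y}.
Proof. repeat decide equality; apply Z.eq_dec. Defined.

Lemma Int_part_bounds r : IZR (Int_part r) <= r /\ r - 1 < IZR (Int_part r).
Proof. destruct (base_Int_part r). split; lra. Qed.

Lemma Rpower_1eps x e : 0 < x -> Rpower x (1 + e) = x * Rpower x e.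
Proof. intros. rewrite Rpower_plus, Rpower_1; auto. Qed.

Lemma two_pow_lt m n : (m < n)%nat -> 2 * 2 ^ m <= 2 ^ n.
Proof. intros. change (2 * 2 ^ m) with (2 ^ S m). apply Rle_pow; lra || lia. Qed.

Theorem lemma3p6 (eps c : R) :
  (0 < eps < 1)%R -> (12 / eps <= c)%R ->
  exists N0 : nat, forall (n0 : nat) (S : pt -> Prop),
    (N0 <= n0)%nat -> construction eps c n0 S ->
    exists N : nat, forall m n : nat,
      (n0 <= m)%nat -> (m < n)%nat -> (N <= n)%nat ->
      exists k : nat, card_is (pair_triple eps c S m n) k /\
        (INR k <= 8 * 2 ^ (m + n) /
           (c ^ 3 * Rpower (INR n) (2 + 2 * eps) * Rpower (INR m) (1 + eps))
           * INR n)%R.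
Proof.
  intros Heps Hc0.
  assert (Hc : 12 <= c).
  { assert (1 < / eps) by (rewrite <- Rinv_1; apply Rinv_lt_contravar; lra).
    unfold Rdiv in Hc0. lra. }
  destruct (bigN eps c Heps Hc) as [N HN].
  exists N. intros n0 S Hn0 Hcons. exists N. intros m n Hm Hmn Hn.
  destruct (HN m ltac:(lia)) as [Hm16 [Hm5c [Hrm42 Hrm29]]].
  destruct (HN n ltac:(lia)) as [Hn16 [Hn5c [Hrn42 Hrn29]]].
  destruct Hcons as [_ Hcons].
  destruct (Hcons m ltac:(lia)) as [P [A0 [B0 [[HPpr [HPlt HPmax]] [_ [_ [_ [f [_ Hiff]]]]]]]]].
  clear Hcons.
  set (Xm := (2 ^ Z.of_nat m)%Z). set (Xn := (2 ^ Z.of_nat n)%Z).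
  set (Ym := Y_ eps m). set (Yn := Y_ eps n). set (Sm := s_ eps c m). set (Sn := s_ eps c n).
  set (L1 := (Xn - Xm - (P - 1))%Z). set (U1 := (Xn + Sn - Xm)%Z).
  set (L2 := (Yn - Sn - Ym)%Z). set (U2 := (Yn - Ym + (P - 1))%Z).
  set (Lp := map (fun x => (Xm + x, Ym - rpar P A0 B0 x)%Z) (Zrange 0 (P - 1))).
  set (Lw := list_prod (Zrange Xn (Xn + Sn)) (Zrange (Yn - Sn) Yn)).
  assert (HTsub : forall u v w, pair_triple eps c S m n (u, v, w) ->
      ltlex u v /\ inPm Xm Ym P A0 B0 u /\ inPm Xm Ym P A0 B0 v /\
      ((Xn <= fst w <= Xn + Sn)%Z /\ (Yn - Sn <= snd w <= Yn)%Z) /\ collinear u v w).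
  { intros u v w [H1 [H2 [H3 [H4 [H5 [H6 H7]]]]]].
    split; auto. split. apply (proj1 (Hiff u H3) H2). split. apply (proj1 (Hiff v H5) H4).
    split; auto. }
  assert (Hin : forall x, inPm Xm Ym P A0 B0 x -> In x Lp).
  { intros x [x0 [Hx0 ->]]. apply in_map_iff. exists x0. split; auto. apply In_Zrange. lia. }
  destruct (card_exists _ ptt_dec (pair_triple eps c S m n) (list_prod (list_prod Lp Lp) Lw)) as [k Hk].
  { intros [[u v] w] Ht. destruct (HTsub u v w Ht) as [_ [Hu [Hv [Hw _]]]].
    apply in_prod. apply in_prod; apply Hin; auto.
    destruct w as [w1 w2]. apply in_prod; apply In_Zrange; simpl in Hw; lia. }
  exists k. split; auto.
  assert (Hm1 : (1 <= m)%nat) by lia. assert (Hn1 : (1 <= n)%nat) by lia.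
  assert (HmR := INR_lb 16 m Hm16). change (Z.of_nat 16) with 16%Z in HmR.
  assert (HnR := INR_lb 16 n Hn16). change (Z.of_nat 16) with 16%Z in HnR.
  set (rm := rr eps m) in *. set (rn := rr eps n) in *.
  assert (Hrmb := rr_bounds eps Heps m Hm1). assert (Hrnb := rr_bounds eps Heps n Hn1).
  fold rm in Hrmb. fold rn in Hrnb.
  assert (HX : IZR Xn = 2 ^ n) by (unfold Xn; rewrite <- pow_IZR; reflexivity).
  assert (HXm : IZR Xm = 2 ^ m) by (unfold Xm; rewrite <- pow_IZR; reflexivity).
  assert (H2mn := two_pow_lt m n Hmn).
  assert (H2m : 0 < 2 ^ m) by (apply pow_lt; lra).
  set (Fm := 2 ^ m / (c * Rpower (INR m) (1 + eps))).
  set (Fn := 2 ^ n / (c * Rpower (INR n) (1 + eps))).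
  assert (EFm : Fm = FF eps m / c).
  { unfold Fm, FF. rewrite Rpower_1eps by lra. fold (rr eps m). fold rm. field. split; lra. }
  assert (EFn : Fn = FF eps n / c).
  { unfold Fn, FF. rewrite Rpower_1eps by lra. fold (rr eps n). fold rn. field. split; lra. }
  assert (HFF := FF_mono eps Heps m n ltac:(lia) Hmn).
  assert (HGG := GG_mono eps Heps m n ltac:(lia) Hmn).
  assert (HFmn : Fm <= 2/3 * Fn).
  { rewrite EFm, EFn. unfold Rdiv. assert (0 < / c) by (apply Rinv_0_lt_compat; lra). nra. }
  assert (HFnX : Fn * (c * INR n * rn) = 2 ^ n).
  { unfold Fn. rewrite Rpower_1eps by lra. fold (rr eps n). fold rn. field. repeat split; lra. }
  assert (HFmX : Fm * (c * INR m * rm) = 2 ^ m).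
  { unfold Fm. rewrite Rpower_1eps by lra. fold (rr eps m). fold rm. field. repeat split; lra. }
  destruct (Int_part_bounds (2 ^ m / (c * Rpower (INR m) (1 + eps)))) as [HSm1 HSm2].
  fold Fm in HSm1, HSm2. change (Int_part Fm) with Sm in HSm1, HSm2.
  destruct (Int_part_bounds (2 ^ n / (c * Rpower (INR n) (1 + eps)))) as [HSn1 HSn2].
  fold Fn in HSn1, HSn2. change (Int_part Fn) with Sn in HSn1, HSn2.
  destruct (Int_part_bounds (2 ^ m / Rpower (INR m) eps)) as [HYm1 HYm2].
  change (Int_part (2 ^ m / Rpower (INR m) eps)) with Ym in HYm1, HYm2.
  fold (rr eps m) in HYm1, HYm2. fold rm in HYm1, HYm2. change (2 ^ m / rm) with (GG eps m) in HYm1, HYm2.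
  destruct (Int_part_bounds (2 ^ n / Rpower (INR n) eps)) as [HYn1 HYn2].
  change (Int_part (2 ^ n / Rpower (INR n) eps)) with Yn in HYn1, HYn2.
  fold (rr eps n) in HYn1, HYn2. fold rn in HYn1, HYn2. change (2 ^ n / rn) with (GG eps n) in HYn1, HYn2.
  set (X := 2 ^ n) in *.
  assert (HGn : GG eps n * rn = X) by (unfold GG, X; fold rn; field; lra).
  assert (HGm : GG eps m * rm = 2 ^ m) by (unfold GG; fold rm; field; lra).
  assert (HGn0 : 0 < GG eps n) by (apply GG_pos; auto; lia).
  assert (HGm0 : 0 < GG eps m) by (apply GG_pos; auto; lia).
  assert (HX4 := pow2_ge n Hn16). fold X in HX4.
  assert (Hm4 := pow2_ge m Hm16).
  assert (Hcc : 0 <= c * c) by nra.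
  assert (HXbig : 5 * c * c * INR n * INR n * rn <= X).
  { assert (5 * c * c * INR n * INR n * rn <= 5 * c * c * INR n * INR n * INR n).
    { apply Rmult_le_compat_l. repeat apply Rmult_le_pos; lra. lra. }
    assert (5 * c * c * (INR n * INR n * INR n) <= INR n * (INR n * INR n * INR n)).
    { apply Rmult_le_compat_r. repeat apply Rmult_le_pos; lra. lra. }
    simpl in HX4. nra. }
  assert (Hcn : 120 <= c * INR n) by nra.
  assert (HFn0 : 0 < Fn) by (rewrite EFn; apply Rdiv_lt_0_compat; [apply FF_pos; auto; lia|lra]).
  assert (HFm0 : 0 < Fm) by (rewrite EFm; apply Rdiv_lt_0_compat; [apply FF_pos; auto; lia|lra]).
  assert (HFnrn : Fn * rn * 120 <= X).
  { rewrite <- HFnX. replace (Fn * (c * INR n * rn)) with (Fn * rn * (c * INR n)) by ring.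
    apply Rmult_le_compat_l. nra. lra. }
  assert (HFm5 : 5 <= Fm).
  { assert (Fm * (c * INR m * rm) <= Fm * (c * INR m * INR m)).
    { apply Rmult_le_compat_l. lra. apply Rmult_le_compat_l. nra. lra. }
    assert (INR m ^ 4 <= Fm * (c * INR m * INR m)) by lra.
    simpl in H0.
    assert (5*c <= 5*c*c) by (assert (0 <= 5*c*(c-1)) by (apply Rmult_le_pos; lra); lra).
    assert (INR m <= INR m * INR m) by (assert (0 <= INR m * (INR m - 1)) by (apply Rmult_le_pos; lra); lra).
    assert (H5c : 5 * c <= INR m * INR m) by lra.
    assert (INR m * INR m * (5*c) <= INR m * INR m * (INR m * INR m)) by (apply Rmult_le_compat_l; [apply Rmult_le_pos|]; lra).
    assert (INR m * INR m * (5 * c) <= INR m * INR m * (Fm * c)) by lra.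
    assert (5 * c <= Fm * c) by (apply (Rmult_le_reg_l (INR m * INR m)); [apply Rmult_lt_0_compat; lra|lra]).
    apply (Rmult_le_reg_r c); lra. }
  assert (HSm3 : (3 < Sm)%Z) by (apply lt_IZR; lra).
  assert (HP3 : (3 <= P)%Z) by (apply HPmax; auto; apply prime_3).
  assert (HpR : IZR P <= Fm - 1) by (assert (IZR P <= IZR Sm - 1) by (rewrite <- minus_IZR; apply IZR_le; lia); lra).
  assert (Hp3 : 3 <= IZR P) by (apply IZR_le; auto).
  assert (HSn0 : (0 <= Sn)%Z) by (assert (-1 < IZR Sn) by lra; apply lt_IZR in H; lia).
  assert (HYm0 : (0 <= Ym)%Z) by (assert (-1 < IZR Ym) by lra; apply lt_IZR in H; lia).
  assert (HSn0R : 0 <= IZR Sn) by (apply IZR_le; auto).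
  assert (HYm0R : 0 <= IZR Ym) by (apply IZR_le; auto).
  assert (EL1 : IZR L1 = X - 2 ^ m - IZR P + 1) by (unfold L1; rewrite !minus_IZR, HX, HXm; ring).
  assert (EU1 : IZR U1 = X + IZR Sn - 2 ^ m) by (unfold U1; rewrite minus_IZR, plus_IZR, HX, HXm; ring).
  assert (EL2 : IZR L2 = IZR Yn - IZR Sn - IZR Ym) by (unfold L2; rewrite !minus_IZR; ring).
  assert (EU2 : IZR U2 = IZR Yn - IZR Ym + IZR P - 1) by (unfold U2; rewrite plus_IZR, !minus_IZR; ring).
  assert (Hl1 : 49/100 * X <= IZR L1) by (rewrite EL1; nra).
  assert (Hl2 : 2/5 * X <= IZR L2 * rn).
  { assert (IZR L2 >= 4/9 * GG eps n - 1 - Fn) by (rewrite EL2; lra).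
    assert (IZR L2 * rn >= (4/9 * GG eps n - 1 - Fn) * rn) by (apply Rle_ge, Rmult_le_compat_r; lra).
    assert (720 * rn <= X).
    { assert (720 * rn <= 5 * c * c * INR n * INR n * rn); [|lra].
      apply Rmult_le_compat_r. lra. nra. }
    nra. }
  assert (Hu2 : IZR U2 * rn <= 101/100 * X).
  { assert (IZR U2 <= GG eps n + Fn) by (rewrite EU2; lra).
    assert (IZR U2 * rn <= (GG eps n + Fn) * rn) by (apply Rmult_le_compat_r; lra).
    nra. }
  assert (HX0 : 0 < X) by (unfold X; apply pow_lt; lra).
  assert (HL1p : (0 < L1)%Z) by (apply lt_IZR; lra).
  assert (HL2p : (0 < L2)%Z).
  { apply lt_IZR. apply (Rmult_lt_reg_r rn). lra. lra. }
  assert (Hk2 := count_main P A0 B0 Xm Ym Xn Yn Sn L1 U1 L2 U2 (pair_triple eps c S m n) k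
                   HPpr HP3 eq_refl eq_refl eq_refl eq_refl HL1p HL2p HTsub Hk).
  apply le_INR in Hk2.
  assert (HU1 : (L1 <= U1)%Z) by (unfold L1, U1; lia).
  assert (HU2 : (L2 <= U2)%Z) by (unfold L2, U2; lia).
  assert (Hlen := len_l2_bound P L1 U1 L2 U2 HP3 (conj HL1p HU1) (conj HL2p HU2) ltac:(unfold L1, U1, L2, U2; lia)).
  cbv zeta in Hlen.
  set (Bn := Z.to_nat (((P - 1) * U2) / L1)) in *.
  assert (Hl1pos : 0 < IZR L1) by lra.
  assert (Hu2pos : 0 < IZR U2) by (apply IZR_lt; lia).
  assert (HBn : INR Bn <= IZR P * IZR U2 / IZR L1).
  { apply INR_Zto_nat_le.
    - eapply Rle_trans. apply div_floor_R; auto. rewrite mult_IZR, minus_IZR.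
      unfold Rdiv. apply Rmult_le_compat_r. left; apply Rinv_0_lt_compat; auto.
      apply Rmult_le_compat_r; lra.
    - apply Rdiv_le_0_compat; [apply Rmult_le_pos|]; lra. }
  assert (HBn0 : 0 <= INR Bn) by apply pos_INR.
  assert (Hu2l1 : IZR U2 <= IZR L1).
  { assert (IZR U2 * 42 <= IZR U2 * rn) by (apply Rmult_le_compat_l; lra). lra. }
  assert (HBnp : INR Bn <= IZR P).
  { eapply Rle_trans. apply HBn. apply div_le; auto. apply Rmult_le_compat_l; lra. }
  set (H := sumR (fun b => / INR b) Bn).
  set (H2 := sumR (fun b => / (INR b * INR b)) Bn).
  assert (HH0 : 0 <= H).
  { apply sumR_nonneg. intros b Hb. assert (0 < INR b) by (apply lt_0_INR; lia).
    left; apply Rinv_0_lt_compat; auto. }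
  assert (HH20 : 0 <= H2).
  { apply sumR_nonneg. intros b Hb. assert (0 < INR b) by (apply lt_0_INR; lia).
    left; apply Rinv_0_lt_compat; nra. }
  assert (HH2 : H2 <= 2).
  { assert (Hs := sumR_inv_sq Bn). fold H2 in Hs.
    assert (0 <= 2 / (INR Bn + 1)) by (apply Rdiv_le_0_compat; lra). lra. }
  assert (HHn : H <= INR n).
  { destruct Bn as [|Bn'] eqn:EB.
    - unfold H. simpl. lra.
    - assert (Hh := sumR_harm (Datatypes.S Bn') ltac:(lia)). fold H in Hh.
      assert (H1B : 1 <= INR (Datatypes.S Bn')) by (apply (le_INR 1); lia).
      assert (ln (INR (Datatypes.S Bn')) <= ln (2 ^ m)).
      { apply ln_le_; try lra.
        assert (Fm <= 2 ^ m).
        { rewrite <- HFmX. assert (1 <= c * INR m * rm).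
          { assert (12 * 16 <= c * INR m) by (apply Rmult_le_compat; lra).
            assert (1 * 1 <= (c * INR m) * rm) by (apply Rmult_le_compat; lra). lra. }
          assert (Fm * 1 <= Fm * (c * INR m * rm)) by (apply Rmult_le_compat_l; lra). lra. }
        lra. }
      rewrite ln_pow in H0 by lra.
      assert (Hln2 := ln2_lt_1).
      assert (0 < ln 2) by (rewrite <- ln_1; apply ln_increasing; lra).
      assert (INR m * ln 2 <= INR m * 1) by (apply Rmult_le_compat_l; lra).
      assert (INR m + 1 <= INR n) by (rewrite <- S_INR; apply le_INR; lia).
      lra. }
  assert (Hfin := final_ineq (IZR P) Fm Fn X (INR n) rn c (IZR L1) (IZR U1) (IZR L2) (IZR U2) (INR Bn) H H2).
  cbv zeta in Hfin.
  assert (h4 : 0 <= IZR U1 - IZR L1) by (rewrite EU1, EL1; lra).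
  assert (h5 : IZR U1 - IZR L1 = IZR U2 - IZR L2) by (rewrite EU1, EL1, EU2, EL2; ring).
  assert (h6 : IZR U1 - IZR L1 <= 5/3 * Fn) by (rewrite EU1, EL1; lra).
  assert (h10 : 10 <= INR n) by lra.
  assert (h1 : 0 < IZR P < Fm) by lra.
  assert (Hfin' := Hfin h1 HFmn HFnX h4 h5 h6 Hl1 Hl2 Hu2 HX0 Hrn42 Hrn29 Hc h10 HXbig
     (conj HBn0 HBn) (conj HH0 HHn) (conj HH20 HH2)).
  assert (Htarget : 8 * Fm * Fn / (c * rn) = 8 * 2 ^ (m + n) /
      (c ^ 3 * Rpower (INR n) (2 + 2 * eps) * Rpower (INR m) (1 + eps)) * INR n).
  { replace (2 + 2 * eps) with ((1 + eps) + (1 + eps)) by ring.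
    rewrite Rpower_plus. unfold Fm, Fn. fold X. rewrite pow_add. fold X.
    rewrite !Rpower_1eps by lra. fold (rr eps n) (rr eps m). fold rn rm.
    field. repeat split; lra. }
  rewrite <- Htarget. eapply Rle_trans. apply Hk2. eapply Rle_trans. apply Hlen. apply Hfin'.
Qed.
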